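(* Let $A\subseteq\mathfrak{S}_n$ be Schur-positive and $\mathrm{cDes}$-invariant, and let $(m_\lambda)_{\lambda\vdash n}$ be nonnegative integers such that $\sum_{\pi\in A}\mathbf{x}^{\mathrm{Des}(\pi)}=\sum_{\lambda\vdash n}m_\lambda\sum_{T\in\mathrm{SYT}(\lambda)}\mathbf{x}^{\mathrm{Des}(T)}$. Then for every $0\le k<n$, $m_{(n-k,1^k)}=|\{a\in A:\mathrm{Des}(a)=[k]\}|$, where $[0]:=\emptyset$.
   Context: For $\pi\in\mathfrak{S}_n$ (one-line notation), $\mathrm{Des}(\pi)=\{i\in[n-1]:\pi(i)>\pi(i+1)\}$ and $\mathrm{cDes}(\pi)=\{i\in[n]:\pi(i)>\pi(i+1)\}$ with $\pi(n+1):=\pi(1)$. $\mathbf{x}^J=\prod_{i\in J}x_i$; $i+J=\{i+j\bmod n:j\in J\}\subseteq[n]$. $A$ is Schur-positive if $\sum_{\pi\in A}\mathcal{F}_{n,\mathrm{Des}(\pi)}$ is symmetric and Schur-nonnegative, where $\mathcal{F}_{n,D}=\sum x_{i_1}\cdots x_{i_n}$ over $i_1\le\cdots\le i_n$ with $i_j<i_{j+1}$ for $j\in D$ (for such $A$, nonnegative integers $m_\lambda$ as in the claim exist). $A$ is $\mathrm{cDes}$-invariant if there is a bijection $\psi:A\to A$ with $\mathrm{cDes}(\psi\pi)=1+\mathrm{cDes}(\pi)$. For $T\in\mathrm{SYT}(\lambda)$, $\mathrm{Des}(T)$ is the set of $i\in[n-1]$ with $i+1$ in a strictly lower row than $i$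 (English notation); $(n-k,1^k)$ denotes the hook partition. *)

(* Defs.v *)
From HB Require Import structures.
From mathcomp Require Import all_boot all_order all_algebra all_fingroup.
From mathcomp Require Import mpoly.
Set Implicit Arguments. Unset Strict Implicit. Unset Printing Implicit Defensive.
Import GRing.Theory.
Local Open Scope ring_scope.

(* CONVENTION: [n] = {1,...,n} is represented by 'I_n via i <-> i+1.
   So a subset J of [n] is a {set 'I_n}; [k] = {1..k} is [set i : 'I_n | i < k];
   the successor i+1 mod n (with values in [n]) is ordS i. *)

Definition Des n (p : 'S_n) : {set 'I_n} :=
  [set i : 'I_n | (i.+1 < n)%N && (p (ordS i) < p i)%N].

Definition cDes n (p : 'S_n) : {set 'I_n} :=
  [set i : 'I_n | (p (ordS i) < p i)%N].

Definition shift1 n (J : {set 'I_n}) : {set 'I_n} := [set ordS j | j in J].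

Definition initseg n (k : nat) : {set 'I_n} := [set i : 'I_n | (i < k)%N].

Definition xmon n (J : {set 'I_n}) : {mpoly int[n]} := \prod_(i in J) 'X_i.

(* Partitions of n: lambda_1 >= lambda_2 >= ... >= lambda_n >= 0 (padded with
   zeros; a partition of n has at most n parts, each <= n), summing to n. *)
Definition partition_of n (l : {ffun 'I_n -> 'I_n.+1}) : bool :=
  [forall i : 'I_n, forall j : 'I_n, (i <= j)%N ==> (l j <= l i)%N] &&
  (\sum_(i : 'I_n) (l i : nat) == n)%N.

Definition cells n (l : {ffun 'I_n -> 'I_n.+1}) :=
  {c : 'I_n * 'I_n | (c.2 < l c.1)%N}.

Definition crow n (l : {ffun 'I_n -> 'I_n.+1}) (a : cells l) : nat := (val a).1.
Definition ccol n (l : {ffun 'I_n -> 'I_n.+1}) (a : cells l) : nat := (val a).2.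

Definition isSYT n (l : {ffun 'I_n -> 'I_n.+1}) (T : {ffun cells l -> 'I_n}) : bool :=
  injectiveb T && [forall i : 'I_n, exists a : cells l, T a == i] &&
  [forall a : cells l, forall b : cells l,
     ((crow a == crow b) && (ccol a < ccol b)%N ==> (T a < T b)%N) &&
     ((ccol a == ccol b) && (crow a < crow b)%N ==> (T a < T b)%N)].

(* Des(T) = { i in [n-1] : i+1 lies in a strictly lower row than i }
   (English notation: lower row = larger row index) *)
Definition DesT n (l : {ffun 'I_n -> 'I_n.+1}) (T : {ffun cells l -> 'I_n}) : {set 'I_n} :=
  [set i : 'I_n | (i.+1 < n)%N &&
     [exists a : cells l, exists b : cells l,
        [&& T a == i, (T b : nat) == i.+1 & (crow a < crow b)%N]]].

Definition isSSYT n N (l : {ffun 'I_n -> 'I_n.+1}) (T : {ffun cells l -> 'I_N}) : bool :=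
  [forall a : cells l, forall b : cells l,
     ((crow a == crow b) && (ccol a < ccol b)%N ==> (T a <= T b)%N) &&
     ((ccol a == ccol b) && (crow a < crow b)%N ==> (T a < T b)%N)].

Definition schur n N (l : {ffun 'I_n -> 'I_n.+1}) : {mpoly int[N]} :=
  \sum_(T : {ffun cells l -> 'I_N} | isSSYT T) \prod_(a : cells l) 'X_(T a).

Definition fundF n N (D : {set 'I_n}) : {mpoly int[N]} :=
  \sum_(w : {ffun 'I_n -> 'I_N} |
          [forall j : 'I_n, (j.+1 < n)%N ==>
             ((w j <= w (ordS j))%N && ((j \in D) ==> (w j < w (ordS j))%N))])
     \prod_(j : 'I_n) 'X_(w j).

(* A quasisymmetric
   function is expressed via its restrictions to N variables, for all N. *)
Definition schur_positive n (A : {set 'S_n}) : Prop :=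
  exists c : {ffun 'I_n -> 'I_n.+1} -> nat,
    forall N : nat,
      let Q := \sum_(p in A) fundF N (Des p) in
      Q \is symmetric /\
      Q = \sum_(l | partition_of l) (c l)%:R * schur N l.

Definition cDes_invariant n (A : {set 'S_n}) : Prop :=
  exists psi : 'S_n -> 'S_n,
    [/\ forall p, p \in A -> psi p \in A,
        {in A &, injective psi},
        forall s, s \in A -> exists2 p, p \in A & psi p = s
      & forall p, p \in A -> cDes (psi p) = shift1 (cDes p)].

Definition hook n (k : nat) : {ffun 'I_n -> 'I_n.+1} :=
  [ffun i : 'I_n => inord (if val i == 0%N then (n - k)%N
                           else if (val i <= k)%N then 1%N else 0%N)].

(* Main.v *)
Require Import Defs.
From HB Require Import structures.
From mathcomp Require Import all_boot all_order all_algebra all_fingroup.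
From mathcomp Require Import mpoly.
From mathcomp Require Import zify.
Import GRing.Theory.

Set Implicit Arguments. Unset Strict Implicit. Unset Printing Implicit Defensive.


Definition posf (k j : nat) : nat * nat := if (j <= k)%N then (j, 0%N) else (0%N, (j - k)%N).

Lemma posfP k j x y : (x, y) = posf k j ->
  ((j <= k)%N /\ x = j /\ y = 0%N) \/ ((k < j)%N /\ x = 0%N /\ y = (j - k)%N).
Proof. by rewrite /posf; case: leqP => h [-> ->]; [left|right]. Qed.

Lemma posf_eq k j x y :
  ((j <= k)%N /\ x = j /\ y = 0%N) \/ ((k < j)%N /\ x = 0%N /\ y = (j - k)%N) ->
  (x, y) = posf k j.
Proof.
rewrite /posf; case: leqP => h [[h1 [-> ->]]|[h1 [-> ->]]] //; lia.
Qed.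

Section S.
Variables (n : nat) (l : {ffun 'I_n -> 'I_n.+1}) (T : {ffun cells l -> 'I_n}).

Lemma Tsurj : isSYT T -> forall i : 'I_n, exists a, T a = i.
Proof. by move=> /andP[/andP[_ /forallP H] _] i; have /existsP[a /eqP] := H i; exists a. Qed.

Lemma Tinj : isSYT T -> injective T.
Proof. by move=> /andP[/andP[/injectiveP H _] _]. Qed.

Lemma Trow a b : isSYT T -> crow a = crow b -> (ccol a < ccol b)%N -> (T a < T b)%N.
Proof.
move=> /andP[_ /forallP H] e lt; have /forallP/(_ b)/andP[H1 _] := H a.
by apply: (implyP H1); rewrite e eqxx lt.
Qed.

Lemma Tcol a b : isSYT T -> ccol a = ccol b -> (crow a < crow b)%N -> (T a < T b)%N.
Proof.
move=> /andP[_ /forallP H] e lt; have /forallP/(_ b)/andP[_ H1] := H a.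
by apply: (implyP H1); rewrite e eqxx lt.
Qed.

Lemma lmono : partition_of l -> forall i j : 'I_n, (i <= j)%N -> (l j <= l i)%N.
Proof. by move=> /andP[/forallP H _] i j le; have /forallP/(_ j)/implyP := H i; apply. Qed.

Lemma cell_eq (a b : cells l) : crow a = crow b -> ccol a = ccol b -> a = b.
Proof.
case: a b => [[r c] Ha] [[r' c'] Hb]; rewrite /crow /ccol /= => e1 e2.
apply: val_inj => /=; by rewrite (ord_inj e1) (ord_inj e2).
Qed.

Lemma cell_up (Hl : partition_of l) (b : cells l) : (0 < crow b)%N ->
  exists u : cells l, crow u = (crow b).-1 /\ ccol u = ccol b.
Proof.
case: b => [[r c] Hb]; rewrite /crow /ccol /= => r0.
have hr : (r.-1 < n)%N by rewrite (leq_ltn_trans (leq_pred r)).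
have Hu : (c < l (Ordinal hr))%N.
  by rewrite (leq_trans Hb) //; apply: lmono Hl _ _ _; rewrite /= leq_pred.
by exists (exist _ (Ordinal hr, c) Hu).
Qed.

Lemma cell_left (b : cells l) : (0 < ccol b)%N ->
  exists v : cells l, crow v = crow b /\ ccol v = (ccol b).-1.
Proof.
case: b => [[r c] Hb]; rewrite /crow /ccol /= => c0.
have hc : (c.-1 < n)%N by rewrite (leq_ltn_trans (leq_pred c)).
have Hv : ((Ordinal hc : nat) < l r)%N by rewrite (leq_ltn_trans (leq_pred c)).
by exists (exist _ (r, Ordinal hc) Hv).
Qed.

End S.


Lemma syt_pos n k (l : {ffun 'I_n -> 'I_n.+1}) (T : {ffun cells l -> 'I_n}) :
  partition_of l -> isSYT T -> DesT T = initseg n k ->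
  forall a, (crow a, ccol a) = posf k (T a).
Proof.
move=> Hl HT HD.
have inj := Tinj HT; have surj := Tsurj HT.
have HDi : forall i : 'I_n, (i \in DesT T) = (i < k)%N by move=> i; rewrite HD inE.
suff H : forall j a, (T a : nat) = j -> (crow a, ccol a) = posf k j by move=> a; exact: H.
elim/ltn_ind => j IH b Tb.
have jn : (j < n)%N by rewrite -Tb ltn_ord.
have notS : forall i, (i < j)%N -> ~ (((i <= k)%N /\ crow b = i /\ ccol b = 0%N) \/
      ((k < i)%N /\ crow b = 0%N /\ ccol b = (i - k)%N)).
  move=> i lt /posf_eq E.
  have iln : (i < n)%N by rewrite (ltn_trans lt).
  have [e Te] := surj (Ordinal iln).
  have Ee := IH i lt e (congr1 val Te).
  have eb : e = b by rewrite -E in Ee; case: Ee => ? ?; apply: cell_eq.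
  by move: lt; rewrite -Tb -eb Te /= ltnn.
have up : (0 < crow b)%N -> exists2 i, (i < j)%N & (((crow b).-1, ccol b) = posf k i).
  move=> r0; have [u [ru cu]] := cell_up Hl r0.
  have lt : (T u < j)%N by rewrite -Tb; apply: (Tcol HT) => //; rewrite ru; lia.
  by exists (T u) => //; rewrite -ru -cu; exact: (IH _ lt).
have lft : (0 < ccol b)%N -> exists2 i, (i < j)%N & ((crow b, (ccol b).-1) = posf k i).
  move=> c0; have [u [ru cu]] := cell_left c0.
  have lt : (T u < j)%N by rewrite -Tb; apply: (Trow HT) => //; rewrite cu; lia.
  by exists (T u) => //; rewrite -ru -cu; exact: (IH _ lt).
apply: posf_eq.
case: (leqP j k) => jk.
  case: (posnP j) => [j0|j0].
    case: (posnP (crow b)) => [r0|r0].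
      case: (posnP (ccol b)) => [c0|c0]; first lia.
      by have [i ij _] := lft c0; lia.
    by have [i ij _] := up r0; lia.
  have iln : (j.-1 < n)%N by lia.
  have : Ordinal iln \in DesT T by rewrite HDi /=; lia.
  rewrite inE => /andP[_ /existsP[a /existsP[a' /and3P[/eqP Ta /eqP Ta' lt]]]].
  have a'b : a' = b by apply: inj; apply: ord_inj; rewrite Ta' Tb /=; lia.
  have /posfP Pa := IH j.-1 ltac:(lia) a (congr1 val Ta).
  rewrite a'b in lt.
  have r0 : (0 < crow b)%N by lia.
  have [i ij /posfP Pi] := up r0.
  lia.
have iln : (j.-1 < n)%N by lia.
have [a Ta] := surj (Ordinal iln).
have /posfP Pa := IH j.-1 ltac:(lia) a (congr1 val Ta).
have hr : (crow b <= crow a)%N.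
  rewrite leqNgt; apply/negP => lt.
  have : Ordinal iln \in DesT T.
    rewrite inE; apply/andP; split; first by rewrite /=; lia.
    apply/existsP; exists a; apply/existsP; exists b.
    by rewrite Ta eqxx /= Tb lt andbT; apply/eqP; lia.
  rewrite HDi /=; lia.
have N1 := notS (crow b).
have N2 := notS (ccol b + k)%N.
case: (posnP (ccol b)) => [c0|c0]; first lia.
have [iv iv1 /posfP Pv] := lft c0.
case: (posnP (crow b)) => [r0|r0]; first lia.
have [iu iu1 /posfP Pu] := up r0.
lia.
Qed.


Lemma hookE n k (i : 'I_n) : (hook n k i : nat) =
  if (i : nat) == 0%N then (n - k)%N else if (i <= k)%N then 1%N else 0%N.
Proof.
rewrite /hook ffunE inordK //.
have := ltn_ord i; case: eqP => _; first lia.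
by case: ifP => _; lia.
Qed.

Lemma hookP n k (i : 'I_n) :
  ((i : nat) = 0%N /\ (hook n k i : nat) = (n - k)%N) \/
  ((0 < i <= k)%N /\ (hook n k i : nat) = 1%N) \/
  ((k < i)%N /\ (0 < i)%N /\ (hook n k i : nat) = 0%N).
Proof.
move: (hookE k i); case: ifP => [/eqP h E|h]; first by left.
by case: ifP => h2 E; right; [left|right]; lia.
Qed.

Lemma ord_lt_eq n (a b : nat) : (a <= n)%N -> (b <= n)%N ->
  (forall c : 'I_n, (c < a)%N = (c < b)%N) -> a = b.
Proof.
move=> an bn H; case: (ltngtP a b) => // ab.
  have an' : (a < n)%N by lia.
  by have := H (Ordinal an'); rewrite /= ltnn ab.
have bn' : (b < n)%N by lia.
by have := H (Ordinal bn'); rewrite /= ltnn ab.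
Qed.

Lemma hook_key n k (l : {ffun 'I_n -> 'I_n.+1}) (T : {ffun cells l -> 'I_n}) :
  (k < n)%N -> partition_of l -> isSYT T -> DesT T = initseg n k ->
  forall r c : 'I_n, (c < l r)%N = (c < hook n k r)%N.
Proof.
move=> kn Hl HT HD; have pos := syt_pos Hl HT HD; have surj := Tsurj HT.
move=> r c; apply/idP/idP => H.
  pose e : cells l := exist _ (r, c) H.
  have /posfP P := pos e.
  have Tn := ltn_ord (T e).
  have re : crow e = r by [].
  have ce : ccol e = c by [].
  rewrite re ce in P; clearbody e.
  set t := nat_of_ord (T e) in P Tn.
  have := hookP k r; set h := nat_of_ord (hook n k r); lia.
have HP := hookP k r.
have jn : ((if (c : nat) == 0%N then (r : nat) else (c + k)%N) < n)%N.
  have := ltn_ord r; case: ifP => [/eqP c0|/negbT c0]; lia.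
have [e Te] := surj (Ordinal jn).
have /posfP P := pos e; rewrite Te /= in P.
case: e P {Te} => [[r' c'] He]; rewrite /crow /ccol /= => P.
have [E1 E2] : r' = r /\ c' = c.
  split; apply: ord_inj; move: P; case: ifP => [/eqP c0|/negbT c0]; lia.
by rewrite -E1 -E2.
Qed.

Lemma eq_hook n k (l : {ffun 'I_n -> 'I_n.+1}) (T : {ffun cells l -> 'I_n}) :
  (k < n)%N -> partition_of l -> isSYT T -> DesT T = initseg n k -> l = hook n k.
Proof.
move=> kn Hl HT HD.
apply/ffunP => r; apply: ord_inj; apply: (@ord_lt_eq n).
- by have := ltn_ord (l r).
- by have := ltn_ord (hook n k r).
by move=> c; apply: (hook_key kn Hl HT HD).
Qed.

Definition T0 n k (l : {ffun 'I_n.+1 -> 'I_n.+2}) : {ffun cells l -> 'I_n.+1} :=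
  [ffun a => inord (if ccol a == 0%N then crow a else (ccol a + k)%N)].

Lemma T0_uniq n k (l : {ffun 'I_n.+1 -> 'I_n.+2}) (T : {ffun cells l -> 'I_n.+1}) :
  partition_of l -> isSYT T -> DesT T = initseg n.+1 k -> T = T0 k l.
Proof.
move=> Hl HT HD; have pos := syt_pos Hl HT HD.
apply/ffunP => a; rewrite ffunE; apply: ord_inj.
have /posfP P := pos a.
have Ta := ltn_ord (T a).
set t := nat_of_ord (T a) in P Ta *. rewrite inordK; case: eqP => c0; lia.
Qed.

Lemma hook_cell n k (a : cells (hook n k)) :
  (crow a = 0%N /\ (ccol a < n - k)%N) \/ ((1 <= crow a <= k)%N /\ ccol a = 0%N).
Proof.
case: a => [[r c] H]; rewrite /crow /ccol /=.
have := hookP k r; set h := nat_of_ord (hook n k r) in H *; simpl in H; lia.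
Qed.

Lemma T0E n k (a : cells (hook n.+1 k)) : (k < n.+1)%N ->
  (ccol a = 0%N /\ (T0 k (hook n.+1 k) a : nat) = crow a) \/
  ((0 < ccol a)%N /\ (T0 k (hook n.+1 k) a : nat) = (ccol a + k)%N).
Proof.
move=> kn; have := hook_cell a; rewrite /T0 ffunE => P.
rewrite inordK; case: eqP => c0; try lia.
Qed.

Lemma mk_col n k (r : 'I_n) : (r <= k)%N -> (k < n)%N ->
  exists a : cells (hook n k), crow a = r /\ ccol a = 0%N.
Proof.
move=> rk kn.
have n0 : (0 < n)%N by lia.
have H : ((Ordinal n0 : nat) < hook n k r)%N.
  by have := hookP k r; rewrite /=; lia.
by exists (exist _ (r, Ordinal n0) H).
Qed.

Lemma mk_row n k (c : 'I_n) : (c < n - k)%N ->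
  exists a : cells (hook n k), crow a = 0%N /\ ccol a = c.
Proof.
move=> ck.
have n0 : (0 < n)%N by lia.
have H : ((c : nat) < hook n k (Ordinal n0))%N by have := hookP k (Ordinal n0); rewrite /=; lia.
by exists (exist _ (Ordinal n0, c) H).
Qed.

Lemma T0_syt n k : (k < n.+1)%N ->
  isSYT (T0 k (hook n.+1 k)) && (DesT (T0 k (hook n.+1 k)) == initseg n.+1 k).
Proof.
move=> kn.
apply/andP; split.
  apply/andP; split; first (apply/andP; split).
  - apply/injectiveP => a b E.
    have := T0E a kn; have := T0E b kn; have := congr1 val E => /= E'.
    have := hook_cell a; have := hook_cell b.
    move=> Pb Pa Tb Ta; apply: cell_eq; lia.
  - apply/forallP => i.
    case: (leqP i k) => ik.
      have [a [ra ca]] := mk_col ik kn.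
      apply/existsP; exists a; apply/eqP; apply: ord_inj.
      have := T0E a kn; lia.
    have ci : (i - k < n.+1)%N by rewrite (leq_ltn_trans (leq_subr k i))//.
    have [a [ra ca]] := @mk_row n.+1 k (Ordinal ci) ltac:(have := ltn_ord i; simpl; lia).
    apply/existsP; exists a; apply/eqP; apply: ord_inj.
    have := T0E a kn; rewrite /= in ca; lia.
  apply/forallP => a; apply/forallP => b.
  have := T0E a kn; have := T0E b kn; have := hook_cell a; have := hook_cell b.
  move=> Pb Pa Tb Ta.
  apply/andP; split; apply/implyP => /andP[/eqP e1 e2]; lia.
apply/eqP/setP => i; rewrite !inE.
case: (ltnP i k) => ik.
  apply/andP; split; first lia.
  have i1 : (i.+1 < n.+1)%N by lia.
  have [a [ra ca]] := @mk_col n.+1 k i (ltnW ik) kn.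
  have [b [rb cb]] := @mk_col n.+1 k (Ordinal i1) ik kn.
  apply/existsP; exists a; apply/existsP; exists b.
  have := T0E a kn; have := T0E b kn; rewrite /= in rb.
  move=> Tb Ta; apply/and3P; split; first (apply/eqP; apply: ord_inj); try apply/eqP; lia.
apply/negP => /andP[_ /existsP[a /existsP[b /and3P[/eqP Ta /eqP Tb lt]]]].
have := T0E a kn; have := T0E b kn; have := hook_cell a; have := hook_cell b.
have Ta' := congr1 val Ta; rewrite /= in Ta'.
lia.
Qed.

Local Open Scope ring_scope.

Definition mon n (J : {set 'I_n}) : 'X_{1..n} := (\sum_(i in J) U_(i))%MM.

Lemma xmonE n (J : {set 'I_n}) : xmon J = 'X_[mon J].
Proof. by rewrite /xmon mprodXE. Qed.

Lemma monE n (J : {set 'I_n}) i : mon J i = (i \in J).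
Proof.
rewrite /mon mnm_sumE.
case: (boolP (i \in J)) => iJ.
  rewrite (bigD1 i) //= mnm1E eqxx big1 // => x /andP[_ /negbTE xi].
  by rewrite mnm1E xi.
rewrite big1 // => x xJ; rewrite mnm1E; case: eqP => // e.
by move: iJ; rewrite -e xJ.
Qed.

Lemma mon_inj n : injective (@mon n).
Proof.
move=> J K E; apply/setP => i; have := congr1 (fun m : 'X_{1..n} => m i) E.
by rewrite /= !monE; case: (i \in J); case: (i \in K).
Qed.

Lemma coef_xmon n (J K : {set 'I_n}) : (xmon J)@_(mon K) = (J == K)%:R :> int.
Proof.
rewrite xmonE mcoeffX; case: (eqVneq J K) => [->|ne]; first by rewrite eqxx.
by case: eqP => // /mon_inj E; rewrite E eqxx in ne.
Qed.

Lemma count_syt n k (l : {ffun 'I_n.+1 -> 'I_n.+2}) : (k < n.+1)%N -> partition_of l ->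
  \sum_(T : {ffun cells l -> 'I_n.+1} | isSYT T) ((DesT T == initseg n.+1 k)%:R : int)
  = (l == hook n.+1 k)%:R.
Proof.
move=> kn Hl; case: (eqVneq l (hook n.+1 k)) => [E|ne].
  subst l.
  have /andP[H1 H2] := T0_syt kn.
  rewrite (bigD1 (T0 k (hook n.+1 k))) //= H2 big1 ?addr0 // => T /andP[HT ne].
  case: eqP => // /(T0_uniq Hl HT) E.
  by rewrite E eqxx in ne.
rewrite big1 // => T HT; case: eqP => // HD.
by rewrite (eq_hook kn Hl HT HD) eqxx in ne.
Qed.

Lemma hook_part n k : (k < n)%N -> partition_of (hook n k).
Proof.
move=> kn; apply/andP; split.
  apply/forallP => i; apply/forallP => j; apply/implyP => ij.
  have := hookP k i; have := hookP k j; lia.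
rewrite (eq_bigr (fun i : 'I_n => (if (i : nat) == 0%N then (n - k)%N
   else if (i <= k)%N then 1%N else 0%N))); last by move=> i _; rewrite hookE.
rewrite -(big_mkord xpredT (fun j => if j == 0%N then (n - k)%N
   else if (j <= k)%N then 1%N else 0%N)).
rewrite (@big_cat_nat _ _ _ 1 0 n _ _ (leq0n 1) (leq_ltn_trans (leq0n k) kn)) /=.
rewrite (@big_cat_nat _ _ _ k.+1 1 n _ _ (ltn0Sn k) kn) /=.
rewrite big_nat1 /=.
rewrite (@eq_big_nat _ _ _ 1 k.+1 _ (fun _ => 1%N)); last first.
  move=> i /andP[h1 h2]; case: eqP => [e|_]; first lia.
  by rewrite ifT //; lia.
rewrite sum_nat_const_nat big_nat_cond big1 ?addn0; first lia.
move=> i /andP[/andP[h1 h2] _]; case: eqP => [e|_]; first lia.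
by rewrite ifF //; lia.
Qed.

Unset Implicit Arguments. Set Strict Implicit.

Theorem lemma3p7 (n : nat) (A : {set 'S_n})
  (m : {ffun 'I_n -> 'I_n.+1} -> nat) :
  schur_positive A ->
  cDes_invariant A ->
  \sum_(p in A) xmon (Des p) =
    \sum_(l | partition_of l) (m l)%:R *
       \sum_(T : {ffun cells l -> 'I_n} | isSYT T) xmon (DesT T) ->
  forall k : nat, (k < n)%N ->
    m (hook n k) = #|[set a in A | Des a == initseg n k]|.
Proof.
case: n A m => [|n] A m _ _ E k kn; first by [].
have := congr1 (mcoeff (mon (initseg n.+1 k))) E.
rewrite !raddf_sum /=.
under eq_bigr do rewrite coef_xmon.
under [RHS]eq_bigr => l Hl.
  rewrite mulr_natl mcoeffMn raddf_sum /=.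
  under eq_bigr do rewrite coef_xmon.
  rewrite (count_syt kn Hl).
  over.
rewrite /= (bigD1 (hook n.+1 k)) /=; last exact: hook_part.
rewrite eqxx [X in _ = _ + X]big1 ?addr0; last first.
  by move=> l /andP[_ /negbTE ->]; rewrite mul0rn.
rewrite -natr_sum mulr1n => /eqP; rewrite Num.Theory.eqr_nat => /eqP <-.
rewrite (bigID (fun p => Des p == initseg n.+1 k)) /= [X in (_ + X)%N = _]big1 ?addn0; last first.
  by move=> p /andP[_ /negbTE ->].
rewrite -sum1_card; apply: eq_big => [p|p /andP[_ ->] //].
by rewrite inE.
Qed.
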